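(* Let $r=(r(k))_{k\in2\mathbb{Z}}\in\ell^2(2\mathbb{Z})$ with $r(k)\ge0$. For $n,s\in\mathbb{N}$ and $m\in n+2\mathbb{Z}$ define $$\sigma_1(n,s;m)=\sum_{j_1,\dots,j_s\neq n}\frac{r(m+j_1)}{|n-j_1|}\cdot\frac{r(j_1+j_2)}{|n-j_2|}\cdots\frac{r(j_{s-1}+j_s)}{|n-j_s|},$$ where $j_1,\dots,j_s$ range over $n+2\mathbb{Z}\setminus\{n\}$. Let $\tilde\rho_n=\mathcal{E}_n(r)+2\|r\|/\sqrt n$. Then for $n\ge4$: $$\sigma_1(n,1;m)\le\tilde\rho_n\ \text{ if } |m-n|\le n/2,\qquad \sigma_1(n,1;m)\le\|r\|\ \text{ for all } m\in n+2\mathbb{Z},$$ and, for all $p\in\mathbb{N}$ (and, for the second inequality, also $p=0$) and all $m\in n+2\mathbb{Z}$, $$\sigma_1(n,2p;m)\le(2\|r\|\tilde\rho_n)^p,\qquad \sigma_1(n,2p+1;m)\le\|r\|\,(2\|r\|\tilde\rho_n)^p.$$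
   Context: $\|r\|$ denotes the $\ell^2$ norm of $r$, and $\mathcal{E}_n(r)=\left(\sum_{|k|\ge n}|r(k)|^2\right)^{1/2}$ is the $\ell^2$-norm of the tail of $r$. *)

(* Defs.v *)
From HB Require Import structures.
From mathcomp Require Import all_boot all_order all_algebra.
From mathcomp Require Import all_classical all_reals all_analysis.
Set Implicit Arguments. Unset Strict Implicit. Unset Printing Implicit Defensive.
Import Order.TTheory GRing.Theory Num.Theory.
Local Open Scope classical_set_scope.
Local Open Scope ring_scope.

(* r : 2Z -> R is represented by a function int -> R; only its values on
   even integers are ever used. *)
Definition evenz (k : int) : Prop := (2 %| k)%Z.

Definition admissible (n : nat) (j : int) : Prop :=
  (2 %| (j - n%:Z))%Z /\ j <> n%:Z.

Fixpoint chain_term (R : realType) (r : int -> R) (n : nat) (m : int)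
    (js : seq int) : R :=
  match js with
  | [::] => 1
  | j :: js' => r (m + j) / (`|n%:Z - j|%:~R) * chain_term r n j js'
  end.

Definition sigma1 (R : realType) (r : int -> R) (n s : nat) (m : int) : \bar R :=
  (\esum_(js in [set js : seq int | size js = s /\ forall j, j \in js -> admissible n j])
      (chain_term r n m js)%:E)%R.

Definition sqnorm2Z (R : realType) (r : int -> R) : \bar R :=
  (\esum_(k in evenz) (r k ^+ 2)%:E)%R.

Definition l2_2Z (R : realType) (r : int -> R) : Prop :=
  (sqnorm2Z r < +oo)%E.

Definition norm2Z (R : realType) (r : int -> R) : R := Num.sqrt (fine (sqnorm2Z r)).

Definition tail2Z (R : realType) (r : int -> R) (n : nat) : R :=
  Num.sqrt (fine (\esum_(k in [set k | evenz k /\ (n%:Z <= `|k|)%R]) (r k ^+ 2)%:E)%R).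

Definition rho_tilde (R : realType) (r : int -> R) (n : nat) : R :=
  tail2Z r n + 2 * norm2Z r / Num.sqrt (n%:R).

(* Main.v *)
Require Import Defs.
From HB Require Import structures.
From mathcomp Require Import all_boot all_order all_algebra.
From mathcomp Require Import all_classical all_reals all_analysis.
From mathcomp Require Import zify ring lra.
Import Order.TTheory GRing.Theory Num.Theory.
Set Implicit Arguments. Unset Strict Implicit.
Local Open Scope classical_set_scope.
Local Open Scope ring_scope.
Lemma esum_sub (R : realType) (T : choiceType) (A B : set T) (f : T -> \bar R) :
  A `<=` B -> (\esum_(i in A) f i <= \esum_(i in B) f i)%E.
Proof.
move=> AB; apply: ge_ereal_sup => _ [X [finX XA] <-].
by apply: ereal_sup_ubound; exists X => //; split => // x /XA /AB.
Qed.

Lemma esumZl_le (R : realType) (T : choiceType) (D : set T) (c : R) (a : T -> \bar R) :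
  0 <= c -> (forall i, D i -> (0 <= a i)%E) ->
  (\esum_(i in D) (c%:E * a i) <= c%:E * \esum_(i in D) a i)%E.
Proof.
move=> c0 a0; apply: ge_ereal_sup => _ [X [finX XD] <-].
rewrite fsbig_finite //= big_seq -ge0_sume_distrr; last first.
  by move=> i; rewrite in_fset_set // inE => /XD /a0.
rewrite -big_seq -fsbig_finite //; apply: lee_wpmul2l; first by rewrite lee_fin.
by apply: ereal_sup_ubound; exists X.
Qed.
Lemma real_cs (R : realFieldType) (x al be : R) : 0 <= al -> 0 <= be ->
 (forall t, 0 < t -> x <= (t * al ^+ 2 + be ^+ 2 / t) / 2) -> x <= al * be.
Proof.
move=> a0 b0 H; apply/ler_addgt0Pr => e e0.
have S0 : 0 < al + be + e + 1 by lra.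
pose ep := e / (al + be + e + 1).
have epS : ep * (al + be + e + 1) = e by rewrite /ep mulrVK ?unitfE ?gt_eqF.
have ep0 : 0 < ep by rewrite /ep divr_gt0.
have u0 : 0 < al + ep by lra.
have v0 : 0 < be + ep by lra.
have t0 : 0 < (be + ep) / (al + ep) by rewrite divr_gt0.
have h1 : (be + ep) / (al + ep) * al ^+ 2 <= (be + ep) * (al + ep).
  rewrite mulrAC ler_pdivrMr // -mulrA ler_pM2l //; nra.
have h2 : be ^+ 2 / ((be + ep) / (al + ep)) <= (be + ep) * (al + ep).
  rewrite invf_div mulrA ler_pdivrMr //.
  have hh : be ^+ 2 <= (be + ep) ^+ 2 by nra.
  have := ler_wpM2r (ltW u0) hh.
  suff -> : (be + ep) * (al + ep) * (be + ep) = (be + ep) ^+ 2 * (al + ep) by [].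
  by ring.
apply: le_trans (H _ t0) _.
have h3 : (be + ep) * (al + ep) <= al * be + e by nra.
lra.
Qed.

Lemma esum_CS (R : realType) (T : choiceType) (E : set T) (a b : T -> R) (al be : R) :
  (forall i, E i -> 0 <= a i) -> (forall i, E i -> 0 <= b i) -> 0 <= al -> 0 <= be ->
  (\esum_(i in E) (a i ^+ 2)%:E <= (al ^+ 2)%:E)%E ->
  (\esum_(i in E) (b i ^+ 2)%:E <= (be ^+ 2)%:E)%E ->
  (\esum_(i in E) (a i * b i)%:E <= (al * be)%:E)%E.
Proof.
move=> a0 b0 al0 be0 ha hb.
have key : forall t, 0 < t ->
    (\esum_(i in E) (a i * b i)%:E <= ((t * al ^+ 2 + be ^+ 2 / t) / 2)%:E)%E.
  move=> t t0.
  apply: (@le_trans _ _ (\esum_(i in E) ((t / 2)%:E * (a i ^+ 2)%:E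
                          + (2 * t)^-1%:E * (b i ^+ 2)%:E))%E).
    apply: le_esum => i Ei; rewrite -!EFinM -EFinD lee_fin -subr_ge0.
    have -> : t / 2 * a i ^+ 2 + (2 * t)^-1 * b i ^+ 2 - a i * b i
        = (t * a i - b i) ^+ 2 / (2 * t).
      by field; rewrite gt_eqF.
    by rewrite divr_ge0 // ?sqr_ge0 // mulr_ge0 // ltW.
  rewrite esumD; last 2 first.
  - by move=> i _; rewrite -EFinM lee_fin mulr_ge0 // ?sqr_ge0 // divr_ge0 // ltW.
  - by move=> i _; rewrite -EFinM lee_fin mulr_ge0 // ?sqr_ge0 // invr_ge0 mulr_ge0 // ltW.
  apply: le_trans (leeD (@esumZl_le _ _ E (t / 2) (fun i => (a i ^+ 2)%:E) _ _)
    (@esumZl_le _ _ E (2 * t)^-1 (fun i => (b i ^+ 2)%:E) _ _)) _.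
  - by rewrite divr_ge0 // ltW.
  - by move=> i _; rewrite lee_fin sqr_ge0.
  - by rewrite invr_ge0 mulr_ge0 // ltW.
  - by move=> i _; rewrite lee_fin sqr_ge0.
  apply: le_trans (leeD (lee_wpmul2l _ ha) (lee_wpmul2l _ hb)) _.
  - by rewrite lee_fin divr_ge0 // ltW.
  - by rewrite lee_fin invr_ge0 mulr_ge0 // ltW.
  rewrite -!EFinM -EFinD lee_fin le_eqVlt; apply/orP; left; apply/eqP.
  by field; rewrite gt_eqF.
have x0 : (0 <= \esum_(i in E) (a i * b i)%:E)%E.
  by apply: esum_ge0 => i Ei; rewrite lee_fin mulr_ge0 // ?a0 ?b0.
have xfin : (\esum_(i in E) (a i * b i)%:E < +oo)%E.
  by apply: le_lt_trans (key 1 ltr01) _; rewrite ltry.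
rewrite -(@fineK _ (\esum_(i in E) (a i * b i)%:E)); last first.
  by rewrite ge0_fin_numE.
rewrite lee_fin; apply: real_cs => // t t0.
by rewrite -lee_fin fineK ?ge0_fin_numE // key.
Qed.
Definition ct (R : realFieldType) (i : nat) : R := ((2 * (2 * i + 1))%:R)^-1.
Definition tt (R : realFieldType) (i : nat) : R := ((2 * i.+1)%:R)^-1 ^+ 2.

Lemma tt_le (R : realFieldType) (k : nat) : tt R k <= ct R k - ct R k.+1.
Proof.
rewrite /tt /ct.
have -> : ((2 * k.+1)%:R : R) = 2 * k%:R + 2 by rewrite natrM -addn1 natrD; ring.
have -> : ((2 * (2 * k + 1))%:R : R) = 2 * (2 * k%:R + 1) by rewrite !natrM natrD; ring.
have -> : ((2 * (2 * k.+1 + 1))%:R : R) = 2 * (2 * k%:R + 3)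
  by rewrite !natrM natrD -addn1 natrD; ring.
have x0 : (0 : R) <= k%:R by [].
have -> : (2 * (2 * k%:R + 1))^-1 - (2 * (2 * k%:R + 3))^-1
   = ((2 * k%:R + 1) * (2 * k%:R + 3))^-1 :> R.
  by field; rewrite !gt_eqF //; lra.
rewrite exprVn expr2 lef_pV2 ?posrE; try nra.
Qed.

Lemma tele (R : realFieldType) (a k : nat) :
  \sum_(0 <= i < k | (a <= i)%N) tt R i <= ct R a - ct R (maxn k a).
Proof.
elim: k => [|k IH].
  by rewrite big_geq // max0n subrr.
rewrite big_mkcond big_nat_recr //= -big_mkcond; case: (leqP a k) => ak.
  have -> : maxn k.+1 a = k.+1 by lia.
  have e : maxn k a = k by lia.
  rewrite e in IH; have := tt_le R k; lra.
rewrite addr0; have -> : maxn k.+1 a = maxn k a by lia.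
exact: IH.
Qed.

Lemma ct_ge0 (R : realFieldType) i : 0 <= ct R i.
Proof. by rewrite /ct invr_ge0. Qed.

Lemma tt_ge0 (R : realFieldType) i : 0 <= tt R i.
Proof. by rewrite /tt sqr_ge0. Qed.


Lemma esum_tail (R : realType) (a : nat) :
  (\esum_(i in [set i : nat | (a <= i)%N]) (tt R i)%:E <= (ct R a)%:E)%E.
Proof.
rewrite -(@nneseries_esum _ _ (fun i => (a <= i)%N)); last first.
  by move=> i _; rewrite lee_fin tt_ge0.
apply: lime_le; first by apply: is_cvg_nneseries_cond => i _ _; rewrite lee_fin tt_ge0.
apply: nearW => k /=; rewrite sumEFin lee_fin.
apply: le_trans (tele R a k) _; rewrite lerBlDr lerDl; exact: ct_ge0.
Qed.
Definition bw (R : realType) (n : nat) (j : int) : R := (`|n%:Z - j|%:~R)^-1.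

Definition Da (n a : nat) : set int :=
  [set j | admissible n j /\ (2 * (a.+1)%:Z <= `|n%:Z - j|)].

Lemma bw_e (R : realType) (n i : nat) (s : bool) :
  bw R n (n%:Z + (-1) ^+ s * (2 * (i.+1)%:Z)) ^+ 2 = tt R i.
Proof.
rewrite /bw /tt.
have -> : `|n%:Z - (n%:Z + (-1) ^+ s * (2 * (i.+1)%:Z))| = (2 * i.+1)%N%:Z.
  by case: s; rewrite /= ?expr0 ?expr1; lia.
by [].
Qed.

Lemma esum_Da (R : realType) (n a : nat) :
  (\esum_(j in Da n a) (bw R n j ^+ 2)%:E <= (2 * ct R a)%:E)%E.
Proof.
rewrite (esumID [set j | n%:Z < j]); last first.
  by move=> j _; rewrite lee_fin sqr_ge0.
have H : forall s : bool, (\esum_(j in (fun i : nat => (n%:Z + (-1) ^+ s * (2 * (i.+1)%:Z))%R) @`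
                [set i : nat | (a <= i)%N]) (bw R n j ^+ 2)%:E <= (ct R a)%:E)%E.
  move=> s; rewrite esum_image; last first.
    by move=> i j _ _; case: s; rewrite /= ?expr0 ?expr1; lia.
  under eq_esum do rewrite bw_e.
  exact: esum_tail.
have -> : (2 * ct R a)%:E = ((ct R a)%:E + (ct R a)%:E)%E by rewrite -EFinD; congr (_%:E); ring.
apply: leeD.
- apply: le_trans (H false); apply: esum_sub => j [[[/dvdzP [q hq] hjn] hd] hlt].
  exists (`|q|.-1); rewrite /= ?expr0 ?mul1r in hlt *; lia.
- apply: le_trans (H true); apply: esum_sub => j [[[/dvdzP [q hq] hjn] hd] hlt].
  exists (`|q|.-1); rewrite /= ?expr1 ?mulN1r in hlt *; lia.
Qed.

Lemma esum_bw_le1 (R : realType) (n : nat) (E : set int) :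
  E `<=` admissible n -> (\esum_(j in E) (bw R n j ^+ 2)%:E <= (1 ^+ 2)%:E)%E.
Proof.
move=> EA; apply: (@le_trans _ _ (\esum_(j in Da n 0) (bw R n j ^+ 2)%:E)%E).
  apply: esum_sub => j /EA [/dvdzP [q hq] hjn]; split; first by split => //; apply/dvdzP; exists q.
  lia.
apply: le_trans (esum_Da R n 0) _.
rewrite lee_fin /ct /= expr1n mulfV // pnatr_eq0.
Qed.

Lemma esum_bw_far (R : realType) (n : nat) (E : set int) : (4 <= n)%N ->
  E `<=` [set j | admissible n j /\ n%:Z < 2 * `|n%:Z - j|] ->
  (\esum_(j in E) (bw R n j ^+ 2)%:E <= ((2 / Num.sqrt n%:R) ^+ 2)%:E)%E.
Proof.
move=> hn EA; apply: (@le_trans _ _ (\esum_(j in Da n (n %/ 4)) (bw R n j ^+ 2)%:E)%E).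
  apply: esum_sub => j /EA [[/dvdzP [q hq] hjn] hlt]; split.
    by split => //; apply/dvdzP; exists q.
  lia.
apply: le_trans (esum_Da R n _) _.
rewrite lee_fin /ct expr_div_n sqr_sqrtr // expr2 (_ : 2 * 2 = 4) //.
have n0 : (0 : R) < n%:R by rewrite ltr0n; lia.
have hle : (n <= 4 * (2 * (n %/ 4) + 1))%N by lia.
rewrite ler_pdivrMr ?ltr0n; last lia.
rewrite mulrAC ler_pdivlMr //.
by rewrite -!natrM ler_nat; lia.
by rewrite -natrM.
Qed.

Lemma esum_r_shift (R : realType) (r : int -> R) (m : int) (E S : set int) :
  (forall j, E j -> S (m + j)) ->
  (\esum_(j in E) (r (m + j) ^+ 2)%:E <= \esum_(k in S) (r k ^+ 2)%:E)%E.
Proof.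
move=> ES.
have := esum_image E (fun j => m + j) (fun k => (r k ^+ 2)%:E); rewrite /= => <-.
  by apply: esum_sub => _ [j Ej <-]; exact: ES.
by move=> i j _ _ /addrI.
Qed.

Lemma fin_sq (R : realType) (X : \bar R) : (0 <= X)%E -> (X < +oo)%E ->
  X = ((Num.sqrt (fine X)) ^+ 2)%:E.
Proof.
move=> X0 Xf; rewrite sqr_sqrtr ?fine_ge0 // fineK // ge0_fin_numE //.
Qed.

Lemma sqnormE (R : realType) (r : int -> R) : l2_2Z r ->
  sqnorm2Z r = ((norm2Z r) ^+ 2)%:E.
Proof.
move=> hr; apply: fin_sq => //.
by apply: esum_ge0 => k _; rewrite lee_fin sqr_ge0.
Qed.

Definition tailset (n : nat) : set int := [set k | evenz k /\ (n%:Z <= `|k|)%R].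

Lemma tailE (R : realType) (r : int -> R) (n : nat) : l2_2Z r ->
  (\esum_(k in tailset n) (r k ^+ 2)%:E)%E = ((tail2Z r n) ^+ 2)%:E.
Proof.
move=> hr; apply: fin_sq.
  by apply: esum_ge0 => k _; rewrite lee_fin sqr_ge0.
apply: le_lt_trans hr; apply: esum_sub => k [] //.
Qed.

Lemma norm2Z_ge0 (R : realType) (r : int -> R) : 0 <= norm2Z r.
Proof. exact: sqrtr_ge0. Qed.

Lemma tail2Z_ge0 (R : realType) (r : int -> R) n : 0 <= tail2Z r n.
Proof. exact: sqrtr_ge0. Qed.

Definition cfw (R : realType) (r : int -> R) (n : nat) (m j : int) : R :=
  r (m + j) / (`|n%:Z - j|%:~R).

Definition S1 (R : realType) (r : int -> R) (n : nat) (m : int) : \bar R :=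
  (\esum_(j in admissible n) (cfw r n m j)%:E)%E.

Lemma even_add (n : nat) (m j : int) : (2 %| m - n%:Z)%Z -> admissible n j -> evenz (m + j).
Proof.
move=> /dvdzP [q hq] [/dvdzP [q' hq'] _]; apply/dvdzP; exists (q + q' + n%:Z); lia.
Qed.

Lemma bw_ge0 (R : realType) n j : 0 <= bw R n j.
Proof. by rewrite /bw invr_ge0 ler0z normr_ge0. Qed.

Lemma cfw_ge0 (R : realType) (r : int -> R) (n : nat) m j :
  (forall k, evenz k -> 0 <= r k) -> (2 %| m - n%:Z)%Z -> admissible n j -> 0 <= cfw r n m j.
Proof.
move=> hr0 hm hj; apply: mulr_ge0; [apply: hr0; exact: even_add hj | exact: bw_ge0].
Qed.

Lemma S1_ge0 (R : realType) (r : int -> R) (n : nat) m :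
  (forall k, evenz k -> 0 <= r k) -> (2 %| m - n%:Z)%Z -> (0 <= S1 r n m)%E.
Proof.
by move=> hr0 hm; apply: esum_ge0 => j hj; rewrite lee_fin; apply: cfw_ge0.
Qed.

Lemma S1_sub_N (R : realType) (r : int -> R) (n : nat) m (E : set int) :
  l2_2Z r -> (forall k, evenz k -> 0 <= r k) -> (2 %| m - n%:Z)%Z ->
  E `<=` admissible n ->
  (\esum_(j in E) (cfw r n m j)%:E <= (norm2Z r * 1)%:E)%E.
Proof.
move=> hr hr0 hm EA.
apply: (@esum_CS _ _ E (fun j => r (m + j)) (bw R n)).
- by move=> j /EA hj; apply: hr0; exact: even_add hj.
- by move=> j _; exact: bw_ge0.
- exact: norm2Z_ge0.
- by [].
- rewrite -sqnormE //; apply: esum_r_shift => j /EA hj; exact: even_add hj.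
- exact: esum_bw_le1.
Qed.

Lemma S1_le_N (R : realType) (r : int -> R) (n : nat) m :
  l2_2Z r -> (forall k, evenz k -> 0 <= r k) -> (2 %| m - n%:Z)%Z ->
  (S1 r n m <= (norm2Z r)%:E)%E.
Proof.
move=> hr hr0 hm; rewrite -(mulr1 (norm2Z r)); exact: S1_sub_N.
Qed.

Lemma S1_sub_far (R : realType) (r : int -> R) (n : nat) m (E : set int) :
  (4 <= n)%N -> l2_2Z r -> (forall k, evenz k -> 0 <= r k) -> (2 %| m - n%:Z)%Z ->
  E `<=` [set j | admissible n j /\ n%:Z < 2 * `|n%:Z - j|] ->
  (\esum_(j in E) (cfw r n m j)%:E <= (norm2Z r * (2 / Num.sqrt n%:R))%:E)%E.
Proof.
move=> hn hr hr0 hm EA.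
apply: (@esum_CS _ _ E (fun j => r (m + j)) (bw R n)).
- by move=> j /EA [hj _]; apply: hr0; exact: even_add hj.
- by move=> j _; exact: bw_ge0.
- exact: norm2Z_ge0.
- by rewrite divr_ge0 // sqrtr_ge0.
- rewrite -sqnormE //; apply: esum_r_shift => j /EA [hj _]; exact: even_add hj.
- exact: esum_bw_far.
Qed.

Lemma S1_le_rho (R : realType) (r : int -> R) (n : nat) m :
  (4 <= n)%N -> l2_2Z r -> (forall k, evenz k -> 0 <= r k) -> (2 %| m - n%:Z)%Z ->
  2 * `|m - n%:Z| <= n%:Z ->
  (S1 r n m <= (rho_tilde r n)%:E)%E.
Proof.
move=> hn hr hr0 hm hmn; rewrite /S1.
rewrite (esumID [set j | n%:Z <= `|m + j|]); last first.
  by move=> j hj; rewrite lee_fin; apply: cfw_ge0.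
have h1 : (\esum_(j in admissible n `&` [set j | (n%:Z <= `|m + j|)%R]) (cfw r n m j)%:E
           <= (tail2Z r n * 1)%:E)%E.
  apply: (@esum_CS _ _ _ (fun j => r (m + j)) (bw R n)).
  - by move=> j [hj _]; apply: hr0; exact: even_add hj.
  - by move=> j _; exact: bw_ge0.
  - exact: tail2Z_ge0.
  - by [].
  - rewrite -tailE //; apply: esum_r_shift => j [hj hj2]; split => //.
    exact: even_add hj.
  - by apply: esum_bw_le1 => j [].
have h2 : (\esum_(j in admissible n `&` ~` [set j | (n%:Z <= `|m + j|)%R]) (cfw r n m j)%:E
           <= (norm2Z r * (2 / Num.sqrt n%:R))%:E)%E.
  apply: S1_sub_far => // j [hj hj2]; split => //.
  move: hj hj2 hm hmn => [/dvdzP [q hq] hjn] /= hj2 /dvdzP [q' hq'] hmn; lia.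
apply: le_trans (leeD h1 h2) _; rewrite -EFinD lee_fin /rho_tilde.
by rewrite mulr1 mulrA [norm2Z r * 2]mulrC.
Qed.

Lemma rho_ge (R : realType) (r : int -> R) (n : nat) :
  norm2Z r * (2 / Num.sqrt n%:R) <= rho_tilde r n.
Proof.
rewrite /rho_tilde mulrA [norm2Z r * 2]mulrC lerDr; exact: tail2Z_ge0.
Qed.

Lemma rho_ge0 (R : realType) (r : int -> R) (n : nat) : 0 <= rho_tilde r n.
Proof.
apply: le_trans (rho_ge r n); apply: mulr_ge0; first exact: norm2Z_ge0.
by rewrite divr_ge0 // sqrtr_ge0.
Qed.

Lemma S2_le (R : realType) (r : int -> R) (n : nat) m :
  (4 <= n)%N -> l2_2Z r -> (forall k, evenz k -> 0 <= r k) -> (2 %| m - n%:Z)%Z ->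
  (\esum_(j in admissible n) ((cfw r n m j)%:E * S1 r n j)
     <= (2 * norm2Z r * rho_tilde r n)%:E)%E.
Proof.
move=> hn hr hr0 hm.
have N0 := norm2Z_ge0 r; have rho0 := rho_ge0 r n.
rewrite (esumID [set j | (2 * `|j - n%:Z| <= n%:Z)%R]); last first.
  move=> j hj; apply: mule_ge0; first by rewrite lee_fin; apply: cfw_ge0.
  exact: S1_ge0 hr0 hj.1.
have hA : (\esum_(j in admissible n `&` [set j | (2 * `|j - n%:Z| <= n%:Z)%R])
            ((cfw r n m j)%:E * S1 r n j) <= (rho_tilde r n * (norm2Z r * 1))%:E)%E.
  apply: (@le_trans _ _ (\esum_(j in admissible n `&` [set j | (2 * `|j - n%:Z| <= n%:Z)%R])
            ((rho_tilde r n)%:E * (cfw r n m j)%:E))%E).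
    apply: le_esum => j [hj hA]; rewrite muleC; apply: lee_wpmul2r.
      by rewrite lee_fin; apply: cfw_ge0.
    exact: S1_le_rho hj.1 hA.
  have hz := @esumZl_le _ _ (admissible n `&` [set j | (2 * `|j - n%:Z| <= n%:Z)%R])
     (rho_tilde r n) (fun j => (cfw r n m j)%:E) rho0.
  apply: le_trans (hz _) _.
    by move=> j [hj _]; rewrite lee_fin; apply: cfw_ge0.
  rewrite EFinM; apply: lee_wpmul2l; first by rewrite lee_fin.
  by apply: S1_sub_N => // j [].
have hB : (\esum_(j in admissible n `&` ~` [set j | (2 * `|j - n%:Z| <= n%:Z)%R])
            ((cfw r n m j)%:E * S1 r n j)
          <= (norm2Z r * (norm2Z r * (2 / Num.sqrt n%:R)))%:E)%E.
  apply: (@le_trans _ _ (\esum_(j in admissible n `&` ~` [set j | (2 * `|j - n%:Z| <= n%:Z)%R])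
            ((norm2Z r)%:E * (cfw r n m j)%:E))%E).
    apply: le_esum => j [hj hA2]; rewrite muleC; apply: lee_wpmul2r.
      by rewrite lee_fin; apply: cfw_ge0.
    exact: S1_le_N hj.1.
  have hz := @esumZl_le _ _ (admissible n `&` ~` [set j | (2 * `|j - n%:Z| <= n%:Z)%R])
     (norm2Z r) (fun j => (cfw r n m j)%:E) N0.
  apply: le_trans (hz _) _.
    by move=> j [hj _]; rewrite lee_fin; apply: cfw_ge0.
  rewrite EFinM; apply: lee_wpmul2l; first by rewrite lee_fin.
  apply: S1_sub_far => // j [hj hA2]; split => //.
  move: hj hA2 => [/dvdzP [q hq] hjn] /= hA2; lia.
apply: le_trans (leeD hA hB) _; rewrite -EFinD lee_fin.
have := ler_wpM2l N0 (rho_ge r n).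
set a := norm2Z r * (2 / Num.sqrt n%:R); set N := norm2Z r; set rho := rho_tilde r n.
move=> h; rewrite mulr1 -mulrA; lra.
Qed.

Lemma chain_ge0 (R : realType) (r : int -> R) (n : nat) (js : seq int) (m : int) :
  (forall k, evenz k -> 0 <= r k) -> (2 %| m - n%:Z)%Z ->
  (forall j, j \in js -> admissible n j) -> 0 <= chain_term r n m js.
Proof.
move=> hr0; elim: js m => [|j js IH] m hm hjs /=; first exact: ler01.
have hj : admissible n j by apply: hjs; rewrite mem_head.
apply: mulr_ge0; first exact: (cfw_ge0 hr0 hm hj).
apply: IH; first exact: hj.1.
by move=> k hk; apply: hjs; rewrite in_cons hk orbT.
Qed.

Definition Sset (n s : nat) : set (seq int) :=
  [set js : seq int | size js = s /\ forall j, j \in js -> admissible n j].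

Lemma sigma_rec (R : realType) (r : int -> R) (n s : nat) (m : int) :
  (forall k, evenz k -> 0 <= r k) -> (2 %| m - n%:Z)%Z ->
  (sigma1 r n s.+1 m <= \esum_(j in admissible n) ((cfw r n m j)%:E * sigma1 r n s j))%E.
Proof.
move=> hr0 hm.
rewrite /sigma1 -/(Sset n s.+1) -/(Sset n s).
pose P := admissible n `*`` (fun _ => Sset n s).
apply: (@le_trans _ _ (\esum_(js in (fun k : int * seq int => k.1 :: k.2) @` P)
            (chain_term r n m js)%:E)%E).
  apply: esum_sub => -[|j js] [//= hs hjs].
  exists (j, js) => //; split; first by apply: hjs; rewrite mem_head.
  split; first by case: hs.
  by move=> k hk; apply: hjs; rewrite in_cons hk orbT.
rewrite esum_image; last by move=> [a b] [c d] _ _ /= [-> ->].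
rewrite /P -(@esum_esum _ _ _ (admissible n) (fun _ => Sset n s)
   (fun i js => (chain_term r n m (i :: js))%:E)); last first.
  move=> i js hi [_ hjs]; rewrite lee_fin.
  apply: chain_ge0 => // k; rewrite in_cons => /orP [/eqP -> //|]; exact: hjs.
apply: le_esum => i hi /=.
under eq_esum do rewrite EFinM.
apply: esumZl_le; first exact: cfw_ge0 hr0 hm hi.
move=> js [_ hjs]; rewrite lee_fin; apply: chain_ge0 => //; exact: hi.1.
Qed.

Lemma sigma0_le (R : realType) (r : int -> R) (n : nat) (m : int) :
  (sigma1 r n 0 m <= 1%:E)%E.
Proof.
rewrite /sigma1.
apply: (@le_trans _ _ (\esum_(js in [set [::] : seq int]) (chain_term r n m js)%:E)%E).
  by apply: esum_sub => js [hs _]; case: js hs.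
by rewrite esum_set1 //= lee_fin.
Qed.

Lemma one_step (R : realType) (r : int -> R) (n s : nat) (m : int) (X : R) :
  (forall k, evenz k -> 0 <= r k) -> (2 %| m - n%:Z)%Z -> 0 <= X ->
  (forall j, (2 %| j - n%:Z)%Z -> (sigma1 r n s j <= X%:E)%E) ->
  (sigma1 r n s.+1 m <= X%:E * S1 r n m)%E.
Proof.
move=> hr0 hm X0 hX; apply: le_trans (@sigma_rec R r n s m hr0 hm) _.
apply: (@le_trans _ _ (\esum_(j in admissible n) (X%:E * (cfw r n m j)%:E))%E).
  apply: le_esum => j hj; rewrite muleC; apply: lee_wpmul2r.
    by rewrite lee_fin; apply: cfw_ge0.
  exact: hX hj.1.
apply: esumZl_le => // j hj; rewrite lee_fin; exact: cfw_ge0.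
Qed.

Lemma two_step (R : realType) (r : int -> R) (n s : nat) (m : int) (X : R) :
  (4 <= n)%N -> l2_2Z r ->
  (forall k, evenz k -> 0 <= r k) -> (2 %| m - n%:Z)%Z -> 0 <= X ->
  (forall j, (2 %| j - n%:Z)%Z -> (sigma1 r n s j <= X%:E)%E) ->
  (sigma1 r n s.+2 m <= (X * (2 * norm2Z r * rho_tilde r n))%:E)%E.
Proof.
move=> hn hr hr0 hm X0 hX; apply: le_trans (@sigma_rec R r n s.+1 m hr0 hm) _.
apply: (@le_trans _ _ (\esum_(j in admissible n) (X%:E * ((cfw r n m j)%:E * S1 r n j)))%E).
  apply: le_esum => j hj; rewrite muleCA; apply: lee_wpmul2l.
    by rewrite lee_fin; apply: cfw_ge0.
  exact: one_step hr0 hj.1 X0 hX.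
have hz := @esumZl_le _ _ (admissible n) X (fun j => ((cfw r n m j)%:E * S1 r n j)%E) X0.
apply: le_trans (hz _) _.
  move=> j hj; apply: mule_ge0; first by rewrite lee_fin; apply: cfw_ge0.
  exact: S1_ge0 hr0 hj.1.
rewrite EFinM; apply: lee_wpmul2l; first by rewrite lee_fin.
exact: S2_le.
Qed.

Theorem lemma3 (R : realType) (r : int -> R)
  (hr2 : l2_2Z r) (hr0 : forall k, evenz k -> 0 <= r k)
  (n : nat) (hn : (4 <= n)%N) :
  (forall m : int, (2 %| (m - n%:Z))%Z -> 2 * `|m - n%:Z| <= n%:Z ->
      (sigma1 r n 1 m <= (rho_tilde r n)%:E)%E)
  /\ (forall m : int, (2 %| (m - n%:Z))%Z ->
      (sigma1 r n 1 m <= (norm2Z r)%:E)%E)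
  /\ (forall (p : nat) (m : int), (1 <= p)%N -> (2 %| (m - n%:Z))%Z ->
      (sigma1 r n (2 * p) m <= ((2 * norm2Z r * rho_tilde r n) ^+ p)%:E)%E)
  /\ (forall (p : nat) (m : int), (2 %| (m - n%:Z))%Z ->
      (sigma1 r n (2 * p).+1 m
         <= (norm2Z r * (2 * norm2Z r * rho_tilde r n) ^+ p)%:E)%E).
Proof.
have N0 := norm2Z_ge0 r; have rho0 := rho_ge0 r n.
have K0 : 0 <= 2 * norm2Z r * rho_tilde r n by rewrite !mulr_ge0.
have ev : forall p m, (2 %| m - n%:Z)%Z ->
    (sigma1 r n (2 * p) m <= ((2 * norm2Z r * rho_tilde r n) ^+ p)%:E)%E.
  elim => [|p IH] m hm; first by rewrite muln0 expr0; exact: sigma0_le.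
  rewrite (_ : (2 * p.+1 = (2 * p).+2)%N); last lia.
  rewrite exprSr; apply: two_step => //; exact: exprn_ge0.
have s0 : forall j, (2 %| j - n%:Z)%Z -> (sigma1 r n 0 j <= 1%:E)%E.
  by move=> j _; exact: sigma0_le.
split; [|split; [|split]].
- move=> m hm hmn; apply: le_trans (@one_step R r n 0 m 1 hr0 hm ler01 s0) _.
  rewrite mul1e; exact: S1_le_rho.
- move=> m hm; apply: le_trans (@one_step R r n 0 m 1 hr0 hm ler01 s0) _.
  rewrite mul1e; exact: S1_le_N.
- by move=> p m _ hm; exact: ev.
- move=> p m hm.
  apply: le_trans (@one_step R r n (2 * p) m _ hr0 hm (exprn_ge0 p K0) (ev p)) _.
  rewrite [norm2Z r * _]mulrC EFinM; apply: lee_wpmul2l; first by rewrite lee_fin exprn_ge0.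
  exact: S1_le_N.
Qed.
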